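(* Let $\Omega\subseteq\mathbb{R}^n$ be closed and convex, $f:\mathbb{R}^n\to\mathbb{R}$ continuously differentiable, and $h:\mathbb{R}^n\to(-\infty,+\infty]$ proper, lower semicontinuous and convex with $\mathrm{dom}\,h$ closed, bounded and contained in $\Omega$; let $\phi = f+h$. Let $A_{k-1}>0$, $a_{k-1}=\frac{1+\sqrt{1+4A_{k-1}}}{2}$, $A_k=A_{k-1}+a_{k-1}$. Let $y_{k-1}\in\mathrm{dom}\,h$, $x_{k-1}\in\Omega$, $\tilde x_k = \frac{A_{k-1}}{A_k}y_{k-1}+\frac{a_{k-1}}{A_k}x_{k-1}$, $\lambda_k>0$, $\tau_k\ge0$ and $\gamma\in(0,1)$. Let $$y_k=\operatorname{argmin}_{u\in\mathbb{R}^n}\left\{\ell_f(u;\tilde x_k)+h(u)+\frac{1+\tau_k}{2\lambda_k}\|u-\tilde x_k\|^2\right\},$$ with $\ell_f(u;\tilde x_k) := f(\tilde x_k)+\langle\nabla f(\tilde x_k),u-\tilde x_k\rangle$, and assume that either $y_k=\tilde x_k$, or $U_k\lambda_k\le\gamma$ where $U_k := \frac{2[f(y_k)-\ell_f(y_k;\tilde x_k)]}{\|y_k-\tilde x_k\|^2}$. Define $$\tilde\gamma_k(u):=\ell_f(u;\tilde x_k)+h(u)+\frac{\tau_k}{2\lambda_k}\|u-\tilde x_k\|^2,\qquad \gamma_k(u):=\tilde\gamma_k(y_k)+\frac{1}{\lambda_k}\langle\tilde x_k-y_k,u-y_k\rangle+\frac{\tau_k}{2\lambda_k}\|u-y_k\|^2,$$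 and let $x_k$ be the unique minimizer over $u\in\Omega$ of $a_{k-1}\gamma_k(u)+\frac{1}{2\lambda_k}\|u-x_{k-1}\|^2$. Then for every $u\in\Omega$, $$\lambda_kA_k\phi(y_k)+\frac{\tau_ka_{k-1}+1}{2}\|u-x_k\|^2+\frac{(1-\gamma)A_k}{2}\|y_k-\tilde x_k\|^2 \le \lambda_kA_{k-1}\gamma_k(y_{k-1})+\lambda_ka_{k-1}\gamma_k(u)+\frac12\|u-x_{k-1}\|^2 .$$
   Context: $\|\cdot\|$ and $\langle\cdot,\cdot\rangle$ are the Euclidean norm and inner product on $\mathbb{R}^n$; $\mathrm{dom}\,h=\{u:h(u)<+\infty\}$. *)

(* Defs.v *)
From HB Require Import structures.
From mathcomp Require Import all_boot all_order all_algebra.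
From mathcomp Require Import all_classical all_reals all_analysis.
Set Implicit Arguments. Unset Strict Implicit. Unset Printing Implicit Defensive.
Import Order.TTheory GRing.Theory Num.Theory.
Import numFieldNormedType.Exports.
Local Open Scope classical_set_scope.
Local Open Scope ring_scope.

Section defs.
Context {R : realType} {n : nat}.
Local Notation V := 'rV[R]_n.

Definition dotp (u v : V) : R := \sum_(i < n) u ord0 i * v ord0 i.
Definition enorm (u : V) : R := Num.sqrt (dotp u u).

Definition grad (f : V -> R) (x : V) : V := \row_(i < n) ('d f x (delta_mx ord0 i : V)).

Definition C1 (f : V -> R) : Prop :=
  (forall x : V, differentiable f x) /\ continuous (grad f).

Definition convex_set_ (S : set V) : Prop :=
  forall (x y : V) (t : R), S x -> S y -> 0 <= t <= 1 -> S (t *: x + (1 - t) *: y).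

Definition ebounded (S : set V) : Prop :=
  exists M : R, forall x, S x -> enorm x <= M.

Definition dom (h : V -> \bar R) : set V := [set x | (h x < +oo)%E].

Definition proper_fun (h : V -> \bar R) : Prop :=
  (forall x, h x != -oo%E) /\ (exists x, h x != +oo%E).

(* convexity of an extended-valued function never equal to -oo *)
Definition convex_fun (h : V -> \bar R) : Prop :=
  forall (x y : V) (t : R), 0 < t < 1 ->
    (h (t *: x + (1 - t) *: y)%R <= t%:E * h x + (1 - t)%:E * h y)%E.

Definition lin (f : V -> R) (u x : V) : R := f x + dotp (grad f x) (u - x).

End defs.

(* Main.v *)
Require Import Defs.
From HB Require Import structures.
From mathcomp Require Import all_boot all_order all_algebra.
From mathcomp Require Import all_classical all_reals all_analysis.
From mathcomp Require Import ring lra.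
Import Order.TTheory GRing.Theory Num.Theory.
Import numFieldNormedType.Exports.
Local Open Scope classical_set_scope.
Local Open Scope ring_scope.

Section dot.
Context {R : realType} {n : nat}.
Implicit Types u v w : 'rV[R]_n.
Lemma dotpDl u v w : dotp (u + v) w = dotp u w + dotp v w.
Proof. by rewrite /dotp -big_split; apply: eq_bigr => i _; rewrite mxE mulrDl. Qed.
Lemma dotpC u v : dotp u v = dotp v u.
Proof. by rewrite /dotp; apply: eq_bigr => i _; rewrite mulrC. Qed.
Lemma dotpDr u v w : dotp w (u + v) = dotp w u + dotp w v.
Proof. by rewrite !(dotpC w) dotpDl. Qed.
Lemma dotpZl (c : R) u v : dotp (c *: u) v = c * dotp u v.
Proof. by rewrite /dotp mulr_sumr; apply: eq_bigr => i _; rewrite mxE mulrA. Qed.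
Lemma dotpZr (c : R) u v : dotp v (c *: u) = c * dotp v u.
Proof. by rewrite !(dotpC v) dotpZl. Qed.
Lemma dotpNl u v : dotp (- u) v = - dotp u v.
Proof. by rewrite -scaleN1r dotpZl mulN1r. Qed.
Lemma dotpNr u v : dotp v (- u) = - dotp v u.
Proof. by rewrite !(dotpC v) dotpNl. Qed.
Lemma dotp_ge0 u : 0 <= dotp u u.
Proof. by rewrite /dotp; apply: sumr_ge0 => i _; rewrite -expr2 sqr_ge0. Qed.
Lemma enorm2 u : enorm u ^+ 2 = dotp u u.
Proof. by rewrite /enorm sqr_sqrtr // dotp_ge0. Qed.
Lemma dotp0r u : dotp u 0 = 0.
Proof. by rewrite /dotp big1 // => i _; rewrite mxE mulr0. Qed.
Lemma dotp_eq0 u : dotp u u = 0 -> u = 0.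
Proof.
move=> /eqP; rewrite /dotp psumr_eq0 => [/allP H|i _]; last by rewrite -expr2 sqr_ge0.
apply/matrixP => i j; rewrite mxE (ord1 i).
by have := H j (mem_index_enum _); rewrite /= mulf_eq0 orbb => /eqP.
Qed.
End dot.
Ltac dexp := rewrite ?(dotpDl, dotpDr, dotpNl, dotpNr, dotpZl, dotpZr).
Ltac dnorm v1 v2 v3 v4 v5 v6 :=
  rewrite ?(dotpC v2 v1) ?(dotpC v3 v1) ?(dotpC v4 v1) ?(dotpC v5 v1) ?(dotpC v6 v1)
          ?(dotpC v3 v2) ?(dotpC v4 v2) ?(dotpC v5 v2) ?(dotpC v6 v2)
          ?(dotpC v4 v3) ?(dotpC v5 v3) ?(dotpC v6 v3)
          ?(dotpC v5 v4) ?(dotpC v6 v4) ?(dotpC v6 v5).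

Lemma lim0 (R : realType) (L M : R) : 0 <= M ->
  (forall t : R, 0 < t <= 1 -> 0 <= L + t * M) -> 0 <= L.
Proof.
move=> M0 H; rewrite leNgt; apply/negP => L0.
pose t := (- L) / (2 * (M - L)).
have ML : 0 < M - L by lra.
have t0 : 0 < t by rewrite divr_gt0 ?mulr_gt0 //; lra.
have t1 : t <= 1 by rewrite ler_pdivrMr ?mulr_gt0 //; lra.
have := H t; rewrite t0 t1 => /(_ isT).
have -> : L + t * M = L + (- L) / 2 * (M / (M - L)).
  rewrite /t; field; lra.
have : M / (M - L) <= 1 by rewrite ler_pdivrMr //; lra.
set q := _ / _ => q1.
have : (- L) / 2 * q <= (- L) / 2 by rewrite ler_piMr //; lra.
lra.
Qed.

Definition grk {R : realType} {n : nat} (lam tau l H : R) (xt yk v : 'rV[R]_n) : R :=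
  l + H + tau / (2 * lam) * dotp (yk - xt) (yk - xt) +
  (lam^-1 * dotp (xt - yk) (v - yk) + tau / (2 * lam) * dotp (v - yk) (v - yk)).

Lemma core (R : realType) (n : nat) (a Ap A lam tau gam fy l H : R)
  (yp xp xt yk xk u : 'rV[R]_n) :
  0 < a -> 0 < Ap -> Ap = a ^+ 2 - a -> A = a ^+ 2 ->
  xt = (Ap / A) *: yp + (a / A) *: xp ->
  0 < lam -> 0 <= tau ->
  fy <= l + gam / (2 * lam) * dotp (yk - xt) (yk - xt) ->
  (forall t, 0 < t <= 1 ->
     a * grk lam tau l H xt yk xk + (2 * lam)^-1 * dotp (xk - xp) (xk - xp)
     <= a * grk lam tau l H xt yk (xk + t *: (u - xk))
        + (2 * lam)^-1 * dotp (xk + t *: (u - xk) - xp) (xk + t *: (u - xk) - xp)) ->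
  lam * A * (fy + H) + (tau * a + 1) / 2 * dotp (u - xk) (u - xk)
    + (1 - gam) * A / 2 * dotp (yk - xt) (yk - xt)
  <= lam * Ap * grk lam tau l H xt yk yp + lam * a * grk lam tau l H xt yk u
     + 2^-1 * dotp (u - xp) (u - xp).
Proof.
move=> a0 Ap0 eAp eA ext l0 t0 hD hopt.
set L := a * dotp (xt - yk) (u - xk) + a * tau * dotp (xk - yk) (u - xk)
         + dotp (xk - xp) (u - xk).
have hL : 0 <= L.
  apply: (@lim0 _ L ((a * tau + 1) / 2 * dotp (u - xk) (u - xk))).
    by rewrite mulr_ge0 ?dotp_ge0 // divr_ge0 // addr_ge0 // mulr_ge0 // ltW.
  move=> t /andP[tp t1]; have := hopt t; rewrite tp t1 => /(_ isT).
  rewrite -subr_ge0 => hd.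
  have e : (a * grk lam tau l H xt yk (xk + t *: (u - xk))
        + (2 * lam)^-1 * dotp (xk + t *: (u - xk) - xp) (xk + t *: (u - xk) - xp))
       - (a * grk lam tau l H xt yk xk + (2 * lam)^-1 * dotp (xk - xp) (xk - xp))
       = t / lam * (L + t * ((a * tau + 1) / 2 * dotp (u - xk) (u - xk))).
    rewrite /L /grk; dexp; dnorm yp xp xt yk xk u; field; lra.
  move: hd; rewrite e pmulr_rge0 // divr_gt0 //.
have hP : 0 <= A * tau / 2 * dotp (yk - xt) (yk - xt)
   + A * (1 + tau) / 2 * dotp ((Ap / A) *: yp + (a / A) *: xk - yk) ((Ap / A) *: yp + (a / A) *: xk - yk)
   + tau * Ap * a / (2 * A) * dotp (yp - xk) (yp - xk).
  have A0 : 0 <= A by rewrite eA sqr_ge0.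
  have c1 : 0 <= A * tau / 2 by rewrite divr_ge0 // mulr_ge0.
  have c2 : 0 <= A * (1 + tau) / 2 by rewrite divr_ge0 // mulr_ge0 // addr_ge0.
  have c3 : 0 <= tau * Ap * a / (2 * A)
    by rewrite divr_ge0 ?mulr_ge0 // ?ltW.
  by rewrite !addr_ge0 // mulr_ge0 // dotp_ge0.
rewrite -subr_ge0.
set P := (X in 0 <= X) in hP.
have A0 : A != 0 by rewrite eA expf_neq0 // gt_eqF.
have e : lam * Ap * grk lam tau l H xt yk yp + lam * a * grk lam tau l H xt yk u
     + 2^-1 * dotp (u - xp) (u - xp)
   - (lam * A * (fy + H) + (tau * a + 1) / 2 * dotp (u - xk) (u - xk)
    + (1 - gam) * A / 2 * dotp (yk - xt) (yk - xt))
   = lam * A * (l + gam / (2 * lam) * dotp (yk - xt) (yk - xt) - fy) + L + P.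
  rewrite /L /P /grk ext; dexp; dnorm yp xp xt yk xk u.
  rewrite eAp; move: A0; rewrite eA => A0; field.
  by rewrite !gt_eqF.
rewrite e; apply: addr_ge0 => //; apply: addr_ge0 => //.
have A0' : 0 <= A by rewrite eA sqr_ge0.
by rewrite mulr_ge0 ?subr_ge0 // mulr_ge0 // ltW.
Qed.

Local Open Scope classical_set_scope.

Theorem lemma4p7 (R : realType) (n : nat)
  (Omega : set 'rV[R]_n) (f : 'rV[R]_n -> R) (h : 'rV[R]_n -> \bar R)
  (Aprev a A lam tau gam : R) (yprev xprev xt yk xk : 'rV[R]_n) :
  closed Omega -> convex_set_ Omega ->
  C1 f ->
  proper_fun h -> lower_semicontinuous h -> convex_fun h ->
  closed (dom h) -> ebounded (dom h) -> dom h `<=` Omega ->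
  0 < Aprev ->
  a = (1 + Num.sqrt (1 + 4 * Aprev)) / 2 ->
  A = Aprev + a ->
  dom h yprev -> Omega xprev ->
  xt = (Aprev / A) *: yprev + (a / A) *: xprev ->
  0 < lam -> 0 <= tau -> 0 < gam < 1 ->
  (* y_k is the minimizer over R^n *)
  (forall u : 'rV[R]_n,
     ((lin f yk xt)%:E + h yk + ((1 + tau) / (2 * lam) * enorm (yk - xt) ^+ 2)%:E
      <= (lin f u xt)%:E + h u + ((1 + tau) / (2 * lam) * enorm (u - xt) ^+ 2)%:E)%E) ->
  (yk = xt \/
   (2 * (f yk - lin f yk xt) / enorm (yk - xt) ^+ 2) * lam <= gam) ->
  let gtilde := fun u : 'rV[R]_n =>
    ((lin f u xt)%:E + h u + (tau / (2 * lam) * enorm (u - xt) ^+ 2)%:E)%E in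
  let gk := fun u : 'rV[R]_n =>
    (gtilde yk + (lam^-1 * dotp (xt - yk) (u - yk)
                  + tau / (2 * lam) * enorm (u - yk) ^+ 2)%:E)%E in
  (* x_k is the (unique) minimizer over Omega *)
  Omega xk ->
  (forall u, Omega u ->
     (a%:E * gk xk + ((2 * lam)^-1 * enorm (xk - xprev) ^+ 2)%:E
      <= a%:E * gk u + ((2 * lam)^-1 * enorm (u - xprev) ^+ 2)%:E)%E) ->
  forall u, Omega u ->
    ((lam * A)%:E * ((f yk)%:E + h yk)
     + ((tau * a + 1) / 2 * enorm (u - xk) ^+ 2)%:E
     + ((1 - gam) * A / 2 * enorm (yk - xt) ^+ 2)%:E
     <= (lam * Aprev)%:E * gk yprev + (lam * a)%:E * gk u
        + (2^-1 * enorm (u - xprev) ^+ 2)%:E)%E.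
Proof.
move=> _ cvO _ [hnm _] _ _ _ _ _ Ap0 ea eA _ _ ext lam0 tau0 /andP[g0 g1] _ hU
  gtilde gk Oxk hxk u Ou.
set s := (X in a = (1 + X) / 2) in ea.
have s0 : 0 <= s by rewrite sqrtr_ge0.
have s2 : s ^+ 2 = 1 + 4 * Aprev by rewrite sqr_sqrtr //; lra.
clearbody s.
have a0 : 0 < a by rewrite ea; lra.
have e1 : ((1+s)/2)^+2 - (1+s)/2 = (s^+2 - 1)/4 by field.
have eAp : Aprev = a ^+ 2 - a by rewrite ea e1 s2; field.
have eA2 : A = a ^+ 2 by rewrite eA eAp; ring.
case eh: (h yk) => [H| |]; last by move: (hnm yk); rewrite eh.
  2: { have gkoo : forall v, gk v = +oo%E.
         by move=> v; rewrite /gk /gtilde eh addey // addye.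
       rewrite !gkoo (mulry (lam * Aprev)) (mulry (lam * a)) !gtr0_sg ?mulr_gt0 //. have o : ((1:R)%:E * +oo = +oo)%E by rewrite mul1e. rewrite !o. have -> : (+oo + +oo + (2^-1 * enorm (u - xprev) ^+ 2)%:E = +oo :> \bar R)%E by []. exact: leey. }
have gkE : forall v, gk v = (grk lam tau (lin f yk xt) H xt yk v)%:E.
  by move=> v; rewrite /gk /gtilde eh /grk !enorm2 -!EFinD.
rewrite !gkE -EFinD -!EFinM -!EFinD lee_fin !enorm2.
apply: (@core R n a Aprev A lam tau gam (f yk) (lin f yk xt) H yprev xprev xt yk xk u a0 Ap0 eAp eA2 ext lam0 tau0).
- have eqc : yk = xt ->
    f yk <= lin f yk xt + gam / (2 * lam) * dotp (yk - xt) (yk - xt).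
    by move=> ->; rewrite /lin subrr !dotp0r mulr0 !addr0.
  case: hU => [//|]; rewrite enorm2.
  have [N0|N0] := eqVneq (dotp (yk - xt) (yk - xt)) 0.
    move=> _; apply: eqc; apply/eqP; rewrite -subr_eq0; apply/eqP; exact: dotp_eq0.
  have Np : 0 < dotp (yk - xt) (yk - xt) by rewrite lt0r N0 dotp_ge0.
  move: N0 Np; set N := dotp _ _; set d := f yk - lin f yk xt => N0 Np hle.
  have : d <= gam / (2 * lam) * N.
    have -> : d = (2 * d / N * lam) * (N / (2 * lam)).
      by field; rewrite N0 gt_eqF.
    have -> : gam / (2 * lam) * N = gam * (N / (2 * lam)) by field; rewrite gt_eqF.
    by apply: ler_wpM2r => //; rewrite divr_ge0 ?ltW ?mulr_gt0.
  rewrite /d; lra.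
- move=> t /andP[t0 t1].
  have Ov : Omega (xk + t *: (u - xk)).
    have -> : xk + t *: (u - xk) = t *: u + (1 - t) *: xk.
      by apply/rowP => i; rewrite !mxE; ring.
    by apply: cvO => //; rewrite ltW.
  by have := hxk _ Ov; rewrite !gkE -!EFinM -!EFinD lee_fin !enorm2.
Qed.
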